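(* For every permutation $\pi$ in the domain of $\psi_p$ (respectively $\psi_q$, $\psi_s$), the permutation $\psi_p(\pi)$ (respectively $\psi_q(\pi)$, $\psi_s(\pi)$) has the same number of recoils as $\pi$. For every $\pi$ in the domain of $\psi_r$, $\psi_r(\pi)$ has exactly one more recoil than $\pi$.
   Context: Permutations are in one-line form; $e_n$ is the identity of $S_n$, $e_0$ the empty permutation. Evil-avoiding: avoids $2413,4132,4213,3214$. A recoil of $\pi\in S_n$ is $i\in\{1,\dots,n-1\}$ with $\pi^{-1}_i>\pi^{-1}_{i+1}$. $\rho_{i,j}(\pi)\in S_{n+1}$ ($\pi\in S_n$, $1\le i,j\le n+1$) increases every entry $\ge i$ by $1$ and inserts $i$ at position $j$; $\gamma_{a,b}(\pi)$ ($a>b$) moves the entry at position $a$ to position $b$. $\pi\in S_n$ is $(a,b)$-sandwiched ($a\ge0,b\ge1$) if $(\pi_1,\dots,\pi_a)=(1,\dots,a)$ and $(\pi_{n-b+1},\dots,\pi_n)=(a+1,\dots,a+b)$. Operators: $\psi_p=\rho_{1,1}$ on non-identity evil-avoiding permutations; $\psi_q$ on non-identity evil-avoiding $\pi\in S_n$ with smallest recoil $t$: $\psi_q(\pi)=\gamma_{n-b+2,a+2}(\rho_{t+1,1}(\pi))$ if $\pi$ is $(a,b)$-sandwiched, else $\rho_{t+1,1}(\pi)$; $\psi_r(\pi)=\rho_{1,n+1}(\pi)$ on evil-avoiding $\pi\in S_n$, $n\ge1$; $\psi_s(\pi)=\rho_{\pi_n+1,n+1}(\pi)$ (and $\psi_s(e_0)=[1]$)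 on evil-avoiding $\pi\in S_n$ that are either $e_n$ ($n\ge0$) or satisfy $(\pi_{n-t+1},\dots,\pi_n)=(1,\dots,t)$ for some $t\ge1$. *)

(* Defs.v *)
(* Permutations of {1..n} in one-line form as [seq nat]. *)
From mathcomp Require Import all_boot.
Set Implicit Arguments. Unset Strict Implicit. Unset Printing Implicit Defensive.

Definition is_perm (s : seq nat) : bool := perm_eq s (iota 1 (size s)).

Definition idperm (n : nat) : seq nat := iota 1 n.

Definition order_iso (u p : seq nat) : Prop :=
  size u = size p /\
  forall i j, i < size p -> j < size p ->
    (nth 0 u i < nth 0 u j) = (nth 0 p i < nth 0 p j).

Definition contains (s p : seq nat) : Prop :=
  exists m : bitseq, order_iso (mask m s) p.

Definition avoids (s p : seq nat) : Prop := ~ contains s p.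

Definition evil_avoiding (s : seq nat) : Prop :=
  is_perm s /\ avoids s [:: 2; 4; 1; 3] /\ avoids s [:: 4; 1; 3; 2]
  /\ avoids s [:: 4; 2; 1; 3] /\ avoids s [:: 3; 2; 1; 4].

(* position (1-indexed) of value v in s is (index v s).+1;
   recoil i (1 <= i <= n-1): pi^{-1}_i > pi^{-1}_{i+1} *)
Definition recoils (s : seq nat) : seq nat :=
  [seq i <- iota 1 (size s).-1 | index i.+1 s < index i s].

Definition nrecoils (s : seq nat) : nat := size (recoils s).

(* rho_{i,j}: increase entries >= i by 1, insert i at position j (1-indexed) *)
Definition rho (i j : nat) (s : seq nat) : seq nat :=
  let t := [seq (if i <= x then x.+1 else x) | x <- s] in
  take j.-1 t ++ i :: drop j.-1 t.

(* gamma_{a,b} (a > b): move the entry at position a to position b *)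
Definition gamma (a b : nat) (s : seq nat) : seq nat :=
  let x := nth 0 s a.-1 in
  let s' := take a.-1 s ++ drop a s in
  take b.-1 s' ++ x :: drop b.-1 s'.

Definition sandwiched (a b : nat) (s : seq nat) : bool :=
  [&& 1 <= b, a + b <= size s, take a s == iota 1 a
    & drop (size s - b) s == iota a.+1 b].

Definition min_recoil (s : seq nat) : nat := head 0 (recoils s).

Definition psi_p (s : seq nat) : seq nat := rho 1 1 s.

Definition psi_q (s : seq nat) : seq nat :=
  let n := size s in
  let t := min_recoil s in
  match [pick ab : 'I_n.+1 * 'I_n.+1 | sandwiched ab.1 ab.2 s] with
  | Some ab => gamma (n - ab.2 + 2) (ab.1 + 2) (rho t.+1 1 s)
  | None => rho t.+1 1 s
  end.

Definition psi_r (s : seq nat) : seq nat := rho 1 (size s).+1 s.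

Definition psi_s (s : seq nat) : seq nat :=
  if s is [::] then [:: 1] else rho (last 0 s).+1 (size s).+1 s.

Definition psi_s_dom (s : seq nat) : Prop :=
  evil_avoiding s /\
  (s = idperm (size s) \/
   exists t, 1 <= t /\ t <= size s /\ drop (size s - t) s = iota 1 t).

(* Main.v *)
Require Import Defs.
From mathcomp Require Import all_boot.
From mathcomp Require Import zify.
Set Implicit Arguments. Unset Strict Implicit. Unset Printing Implicit Defensive.

Definition rec (s : seq nat) k := index k.+1 s < index k s.

Lemma nrecE s : nrecoils s = count (rec s) (iota 1 (size s).-1).
Proof. by rewrite /nrecoils /recoils size_filter. Qed.

Definition ins k (x : nat) w := take k w ++ x :: drop k w.
Definition sh k m := if m < k then m else m.+1.

Lemma size_ins k x w : size (ins k x w) = (size w).+1.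
Proof. by rewrite /ins size_cat /= addnS -size_cat cat_take_drop. Qed.

Lemma index_ins k x w y : k <= size w -> y != x -> index y (ins k x w) = sh k (index y w).
Proof.
elim: w k => [|z w IH] [|k] //= Hk Hy.
- by rewrite /ins /= eq_sym (negbTE Hy).
- by rewrite /ins /= eq_sym (negbTE Hy).
- rewrite /ins /= -/(ins k x w); case: eqP => // _.
  rewrite IH //. by rewrite /sh; case: ifP; case: ifP; lia.
Qed.

Lemma index_ins_x k x w : k <= size w -> x \notin take k w -> index x (ins k x w) = k.
Proof. move=> Hk Hx; by rewrite /ins index_cat (negbTE Hx) /= eqxx addn0 size_takel. Qed.

Lemma sh_mono k m1 m2 : (sh k m1 < sh k m2) = (m1 < m2).
Proof. rewrite /sh; case: ifP; case: ifP; lia. Qed.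

Lemma uniq_ins k x w : uniq (ins k x w) = (x \notin w) && uniq w.
Proof.
have P : perm_eq (ins k x w) (x :: w).
  by rewrite /ins -cat1s perm_catCA cat_take_drop perm_refl.
by rewrite (perm_uniq P).
Qed.

Definition fi i x := if i <= x then x.+1 else x.
Definition finv i y := if i < y then y.-1 else y.

Lemma rhoE i j s : rho i j s = ins j.-1 i (map (fi i) s).
Proof. by []. Qed.

Lemma fi_inj i : injective (fi i).
Proof. move=> x y; rewrite /fi; case: ifP; case: ifP; lia. Qed.

Lemma f_finv i y : y != i -> fi i (finv i y) = y.
Proof. rewrite /fi /finv; case: ifP; case: ifP; lia. Qed.

Lemma i_notin i s : i \notin map (fi i) s.
Proof. apply/mapP => -[x _]; rewrite /fi; case: ifP; lia. Qed.

Lemma size_rho i j s : size (rho i j s) = (size s).+1.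
Proof. by rewrite rhoE size_ins size_map. Qed.

Lemma uniq_rho i j s : uniq s -> uniq (rho i j s).
Proof. by move=> Hu; rewrite rhoE uniq_ins i_notin map_inj_uniq //; apply: fi_inj. Qed.

Lemma index_rho i j s y : j.-1 <= size s -> y != i ->
  index y (rho i j s) = sh j.-1 (index (finv i y) s).
Proof.
move=> Hj Hy; rewrite rhoE index_ins ?size_map //.
by rewrite -{1}(f_finv Hy) index_map //; apply: fi_inj.
Qed.

Lemma index_rho_i i j s : j.-1 <= size s -> index i (rho i j s) = j.-1.
Proof.
move=> Hj; rewrite rhoE index_ins_x ?size_map //.
by apply: contra (i_notin i s); apply: mem_take.
Qed.

Section RhoRec.
Variables (i j : nat) (s : seq nat).
Hypothesis Hj : j.-1 <= size s.

Lemma rec_rho_lo k : k.+1 < i -> rec (rho i j s) k = rec s k.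
Proof.
move=> Hk; rewrite /rec !index_rho //; try lia.
rewrite sh_mono /finv; case: ifP; case: ifP; try lia; done.
Qed.

Lemma rec_rho_hi k : i < k -> rec (rho i j s) k = rec s k.-1.
Proof.
move=> Hk; rewrite /rec !index_rho //; try lia.
rewrite sh_mono /finv; case: ifP; case: ifP; try lia => _ _.
by have -> : k.-1.+1 = k by lia.
Qed.

Lemma rec_rho_im1 k : k.+1 = i -> rec (rho i j s) k = (j.-1 < sh j.-1 (index k s)).
Proof.
move=> Hk; rewrite /rec Hk index_rho_i // index_rho //; try lia.
by rewrite /finv; case: ifP; try lia.
Qed.

Lemma rec_rho_i : rec (rho i j s) i = (sh j.-1 (index i s) < j.-1).
Proof.
rewrite /rec index_rho_i // index_rho //; try lia.
by rewrite /finv; case: ifP; try lia.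
Qed.
End RhoRec.

Lemma count_shift1 (P Q : pred nat) m n :
  (forall k, m <= k -> P k.+1 = Q k) -> count P (iota m.+1 n) = count Q (iota m n).
Proof.
elim: n m => //= n IH m H; rewrite H // IH // => k Hk; apply: H; lia.
Qed.

Lemma count_eq_in (P Q : pred nat) m n :
  (forall k, m <= k < m + n -> P k = Q k) -> count P (iota m n) = count Q (iota m n).
Proof. move=> H; apply: eq_in_count => k; rewrite mem_iota; exact: H. Qed.

Lemma count_split (P Q : pred nat) n t : 1 <= t < n ->
  (forall k, 1 <= k < t -> P k = Q k) -> (forall k, t.+1 < k -> P k = Q k.-1) ->
  P t + P t.+1 = Q t :> nat -> count P (iota 1 n) = count Q (iota 1 n.-1).
Proof.
move=> Ht H1 H2 H3.
have E1 : n = t.-1 + (2 + (n - t.+1)) by lia.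
have E2 : n.-1 = t.-1 + (1 + (n - t.+1)) by lia.
have Et : 1 + t.-1 = t by lia.
rewrite {1}E1 E2 !iotaD !count_cat Et addn2 addn1 /=.
rewrite (count_eq_in (Q := Q)); last by move=> k Hk; apply: H1; lia.
rewrite (count_shift1 (m := t.+1) (Q := Q)); last by move=> k Hk; rewrite H2 //; lia.
by rewrite -H3 !addnA.
Qed.

Lemma count_split1 (P Q : pred nat) n : 1 <= n ->
  (forall k, 1 <= k -> P k.+1 = Q k) -> count P (iota 1 n) = P 1 + count Q (iota 1 n.-1).
Proof. case: n => // n _ H /=; by rewrite (count_shift1 (Q := Q)). Qed.

Lemma count_last (P Q : pred nat) n : 1 <= n ->
  (forall k, 1 <= k < n -> P k = Q k) -> ~~ P n -> count P (iota 1 n) = count Q (iota 1 n.-1).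
Proof.
case: n => // n _ H Hn; rewrite -[n.+1]addn1 iotaD count_cat add1n /= (negbTE Hn) addn0 addn0.
rewrite addn1 /=; apply: count_eq_in => k Hk; apply: H; lia.
Qed.

Lemma perm_uniq' s : is_perm s -> uniq s.
Proof. by move=> H; rewrite (perm_uniq H) iota_uniq. Qed.

Lemma perm_in s x : is_perm s -> (x \in s) = (0 < x <= size s).
Proof. by move=> H; rewrite (perm_mem H) mem_iota add1n ltnS. Qed.

Lemma idx_inj (s : seq nat) x y : x \in s -> y \in s -> index x s = index y s -> x = y.
Proof. by move=> Hx Hy E; rewrite -(nth_index 0 Hx) E nth_index. Qed.

Lemma lt_pred_ne a n : a < n -> a != n.-1 -> a < n.-1.
Proof. lia. Qed.

Lemma p_lemma s : nrecoils (rho 1 1 s) = nrecoils s.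
Proof.
rewrite !nrecE size_rho /=.
case: (posnP (size s)) => Hn.
  by rewrite Hn.
rewrite (count_split1 (Q := rec s)) //.
  by rewrite rec_rho_i //= /sh.
by move=> k Hk; rewrite rec_rho_hi //.
Qed.

Lemma r_lemma s : is_perm s -> 1 <= size s -> nrecoils (rho 1 (size s).+1 s) = (nrecoils s).+1.
Proof.
move=> Hp Hn.
rewrite !nrecE size_rho /=.
rewrite (count_split1 (Q := rec s)) //.
  rewrite rec_rho_i //= /sh.
  have : 1 \in s by rewrite perm_in.
  by rewrite -index_mem => H; rewrite H H add1n.
by move=> k Hk; rewrite rec_rho_hi //.
Qed.

Lemma q_gen s t : 1 <= t < size s -> rec s t -> nrecoils (rho t.+1 1 s) = nrecoils s.
Proof.
move=> Ht Hr; rewrite !nrecE size_rho /=.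
apply: (count_split (t := t)) => //.
- by move=> k Hk; rewrite rec_rho_lo //; lia.
- by move=> k Hk; rewrite rec_rho_hi.
- by rewrite rec_rho_im1 // rec_rho_i // Hr /sh.
Qed.

Lemma q_nosand s : nrecoils (rho (min_recoil s).+1 1 s) = nrecoils s.
Proof.
rewrite /min_recoil.
case E: (recoils s) => [|t r] /=; first exact: p_lemma.
have : t \in recoils s by rewrite E mem_head.
rewrite /recoils mem_filter mem_iota => /andP [Hr Ht].
apply: q_gen => //; lia.
Qed.

Lemma s_lemma s : is_perm s -> nrecoils (psi_s s) = nrecoils s.
Proof.
case: s => [|x s'] Hp; first by [].
rewrite /psi_s.
set s := x :: s' in Hp *.
have Hu := perm_uniq' Hp.
set t := last 0 s.
have Htl : t = last x s' by [].
have Hts : t \in s by rewrite Htl mem_last.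
have Hit : index t s = (size s).-1 by rewrite Htl index_last.
have Hn : 0 < size s by [].
have := Hts; rewrite perm_in // => /andP [Ht1 Ht2].
rewrite !nrecE size_rho succnK.
case: (ltnP t (size s)) => Htn.
- apply: (count_split (t := t)).
  + lia.
  + by move=> k Hk; rewrite rec_rho_lo //; lia.
  + by move=> k Hk; rewrite rec_rho_hi.
  + have Hs1 : t.+1 \in s by rewrite perm_in //; lia.
    have Hi1 := Hs1; rewrite -index_mem in Hi1.
    have Hne : index t.+1 s != (size s).-1.
      apply/eqP => E; have := idx_inj Hs1 Hts; rewrite E Hit; lia.
    rewrite rec_rho_im1 // rec_rho_i // /rec Hit /sh succnK.
    have -> : (size s).-1 < size s by lia.
    have -> : (size s < (size s).-1) = false by lia.
    by rewrite !Hi1 (lt_pred_ne Hi1 Hne).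
- have Etn : t = size s by lia.
  rewrite Etn; apply: count_last => //.
  + by move=> k Hk; rewrite rec_rho_lo //; lia.
  + have Hit' : index (size s) s = (size s).-1 by move: Hit; rewrite Etn.
    rewrite rec_rho_im1 // succnK Hit' /sh.
    have -> : (size s).-1 < size s by lia.
    lia.
Qed.

Definition rmv P (u : seq nat) := take P u ++ drop P.+1 u.

Lemma gammaE p q u : 0 < p -> gamma p q u = ins q.-1 (nth 0 u p.-1) (rmv p.-1 u).
Proof. by case: p. Qed.

Lemma index_rmv P (u : seq nat) (y : nat) : P < size u -> index y u != P ->
  index y (rmv P u) = if index y u < P then index y u else (index y u).-1.
Proof.
elim: u P => [|z u IH] P //= HP Hy.
have [Ezy|Nzy] := eqVneq z y.
  by case: P HP Hy => [|P] HP Hy; rewrite /rmv /= Ezy eqxx in Hy *.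
rewrite (negbTE Nzy) in Hy *.
case: P HP Hy => [|P] HP Hy.
  by rewrite /rmv /= drop0.
rewrite /rmv /= -/(rmv P u) (negbTE Nzy) IH; [|lia|lia].
rewrite ltnS; case: ifP => H1 //; lia.
Qed.

Lemma size_rmv P u : P < size u -> size (rmv P u) = (size u).-1.
Proof. move=> H; rewrite /rmv size_cat size_takel ?size_drop; lia. Qed.

Lemma notin_rmv P (u : seq nat) : uniq u -> P < size u -> nth 0 u P \notin rmv P u.
Proof.
move=> Hu HP.
have : uniq (take P u ++ drop P u) by rewrite cat_take_drop.
rewrite (drop_nth 0 HP) cat_uniq /=.
move=> /and3P [_ /norP [Hx _] /andP [Hx2 _]].
by rewrite /rmv mem_cat; apply/norP; split.
Qed.

Lemma H_mono Q P m1 m2 : Q <= P -> m1 != P -> m2 != P ->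
  (sh Q (if m1 < P then m1 else m1.-1) < sh Q (if m2 < P then m2 else m2.-1)) = (m1 < m2).
Proof. move=> *; rewrite sh_mono; do ![case: ifP => ?]; lia. Qed.

Lemma head_filter_iota (P : pred nat) c m : 1 <= c <= m ->
  (forall k, 1 <= k < c -> ~~ P k) -> P c -> head 0 (filter P (iota 1 m)) = c.
Proof.
move=> Hc H Pc.
have E : m = c.-1 + (1 + (m - c)) by lia.
rewrite E iotaD filter_cat (@eq_in_filter _ P pred0) ?filter_pred0 /=.
  by rewrite (_ : 1 + c.-1 = c) ?add1n /= ?Pc //; lia.
by move=> k; rewrite mem_iota => Hk; apply/negbTE/H; lia.
Qed.

Lemma sand_lemma s a b : is_perm s -> s <> idperm (size s) -> sandwiched a b s ->
  nrecoils (gamma (size s - b + 2) (a + 2) (rho (min_recoil s).+1 1 s)) = nrecoils s.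
Proof.
move=> Hp Hid /and4P [Hb Hab /eqP Ht /eqP Hd].
have Hu := perm_uniq' Hp.
set n := size s in Hab Hd Hid *.
have F12 : forall y, 1 <= y <= a + b ->
    index y s = if y <= a then y.-1 else n - b + (y - a.+1).
  move=> y Hy; case: ifP => Hya.
  - have E : nth 0 s y.-1 = y.
      have H1 : y.-1 < a by lia.
      rewrite -(nth_take 0 H1) Ht nth_iota; lia.
    rewrite -{1}E index_uniq //; rewrite -/n; lia.
  - have E : nth 0 s (n - b + (y - a.+1)) = y.
      rewrite -nth_drop Hd nth_iota; lia.
    rewrite -{1}E index_uniq //; rewrite -/n; lia.
have Hab' : a + b < n.
  rewrite ltn_neqAle Hab andbT; apply/eqP => E; apply: Hid.
  have Hd' : drop a s = iota a.+1 b by rewrite -Hd; congr drop; lia.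
  by rewrite -{1}(cat_take_drop a s) Ht Hd' /idperm -E iotaD add1n.
have Hrec_no : forall k, 1 <= k < a + b -> ~~ rec s k.
  move=> k Hk; rewrite /rec (F12 k.+1); last lia.
  rewrite (F12 k); last lia.
  do ![case: ifP => ?]; lia.
have Hin : (a+b).+1 \in s by rewrite perm_in //; lia.
have Hin2 : a + b \in s by rewrite perm_in //; lia.
have Hi := Hin; rewrite -index_mem in Hi.
have Eab : index (a + b) s = n.-1.
  rewrite F12; last lia.
  case: ifP; lia.
have Hrec_ab : rec s (a + b).
  have Hne : index (a+b).+1 s != n.-1.
    rewrite -Eab; apply/eqP => E; have := idx_inj Hin Hin2 E; lia.
  rewrite /rec Eab; exact: lt_pred_ne Hi Hne.
have Hmin : min_recoil s = a + b.
  rewrite /min_recoil /recoils; apply: head_filter_iota => //.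
  rewrite -/n; lia.
rewrite Hmin.
set u := rho (a + b).+1 1 s.
have Hsu : size u = n.+1 by rewrite size_rho.
have Huu : uniq u by apply: uniq_rho.
have Hj : (1:nat).-1 <= size s by [].
have Iu : forall y, 1 <= y <= a + b -> index y u = (index y s).+1.
  move=> y Hy.
  have Hy' : y != (a+b).+1 by lia.
  rewrite /u (index_rho Hj Hy').
  have -> : finv (a+b).+1 y = y by rewrite /finv ifF //; lia.
  by rewrite /sh ltn0.
have I0 : index (a+b).+1 u = 0 by rewrite /u index_rho_i.
have Ix : index a.+1 u = n - b + 1.
  rewrite Iu; last lia.
  rewrite F12; last lia.
  rewrite ifF; last lia.
  lia.
have Hxin : a.+1 \in u by rewrite -index_mem Ix Hsu; lia.
have Hx : nth 0 u (n - b + 1) = a.+1 by rewrite -Ix nth_index.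
rewrite gammaE; last lia.
have -> : (n - b + 2).-1 = n - b + 1 by lia.
have -> : (a + 2).-1 = a.+1 by lia.
rewrite Hx.
have HP : n - b + 1 < size u by rewrite Hsu; lia.
set v := ins a.+1 a.+1 (rmv (n - b + 1) u).
have Hne : forall y, y != a.+1 -> index y u != n - b + 1.
  move=> y Hy; apply/eqP => E.
  have Hyu : y \in u by rewrite -index_mem E Hsu; lia.
  have := nth_index 0 Hyu; rewrite E Hx => E2.
  by rewrite E2 eqxx in Hy.
have Iv : forall y, y != a.+1 -> index y v =
    sh a.+1 (if index y u < n - b + 1 then index y u else (index y u).-1).
  move=> y Hy; rewrite /v index_ins //; last by rewrite size_rmv // Hsu; lia.
  by rewrite index_rmv // Hne.
have Ivx : index a.+1 v = a.+1.
  rewrite /v index_ins_x //; first by rewrite size_rmv // Hsu; lia.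
  apply: contra (notin_rmv Huu HP); rewrite Hx; exact: mem_take.
have Hsv : size v = n.+1 by rewrite /v size_ins size_rmv // Hsu.
rewrite -(q_gen (s := s) (t := a + b) _ Hrec_ab); last by rewrite -/n; lia.
rewrite -/u !nrecE Hsv Hsu.
apply: count_eq_in => k Hk.
have [Eka | Nka] := eqVneq k a.
-
  have Ias : index a s = a.-1 by rewrite F12 ?leqnn; lia.
  have Iau : index a u = a by rewrite Iu ?Ias; lia.
  rewrite Eka /rec Ivx Ix Iv; last lia.
  rewrite Iau (_ : a < n - b + 1 = true); last lia.
  rewrite /sh; do ![case: ifP => ?]; lia.
have [Eka1 | Nka1] := eqVneq k a.+1.
-
  rewrite Eka1 /rec Ivx Ix Iv; last lia.
  have [Eb | Nb] := eqVneq b 1.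
  + have -> : a.+2 = (a + b).+1 by lia.
    rewrite I0 (_ : 0 < n - b + 1 = true); last lia.
    by rewrite /sh.
  + have Ia2s : index a.+2 s = n - b + 1.
      rewrite F12; last lia.
      rewrite ifF; lia.
    have Ia2u : index a.+2 u = n - b + 2 by rewrite Iu ?Ia2s; lia.
    rewrite Ia2u (_ : n - b + 2 < n - b + 1 = false); last lia.
    rewrite /sh; do ![case: ifP => ?]; lia.
- rewrite /rec !Iv; try lia.
  apply: H_mono; try lia; apply: Hne; lia.
Qed.

Theorem proposition5p18 :
  (forall s : seq nat, evil_avoiding s -> s <> idperm (size s) ->
     nrecoils (psi_p s) = nrecoils s) /\
  (forall s : seq nat, evil_avoiding s -> s <> idperm (size s) ->
     nrecoils (psi_q s) = nrecoils s) /\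
  (forall s : seq nat, psi_s_dom s ->
     nrecoils (psi_s s) = nrecoils s) /\
  (forall s : seq nat, evil_avoiding s -> 1 <= size s ->
     nrecoils (psi_r s) = (nrecoils s).+1).
Proof.
split; [|split; [|split]].
- move=> s _ _; exact: p_lemma.
- move=> s [Hp _] Hid; rewrite /psi_q.
  case: pickP => [[a b] /= Hsw|_].
  + exact: sand_lemma.
  + exact: q_nosand.
- move=> s [[Hp _] _]; exact: s_lemma.
- move=> s [Hp _] Hn; exact: r_lemma.
Qed.
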